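(* There is a constant $c$ such that for every pair of positive integers $k,v$ there is an existential, negation-free first-order formula $\beta(g;x_1,\dots,x_k)$ in the language of groups with $|\beta|\le c(k\log v+(\log v)^2)$ such that for every group $G$ with $|G|\le v$ and all $g,x_1,\dots,x_k\in G$: $G\models\beta(g;x_1,\dots,x_k)$ if and only if $g\in\langle x_1,\dots,x_k\rangle$.
   Context: The length $|\phi|$ of a formula is its number of symbols, each variable counting as a single symbol. Here $\log m=\min\{r\in\mathbb N: 2^r\ge m\}$. The language of groups has multiplication, inversion and identity. *)

(* Defs.v *)
From mathcomp Require Import all_boot all_fingroup.
Set Implicit Arguments. Unset Strict Implicit. Unset Printing Implicit Defensive.
Local Open Scope group_scope.

Inductive gterm : Type :=
| TVar of nat
| TOne
| TMul of gterm & gterm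
| TInv of gterm.

Inductive pform : Type :=
| PEq of gterm & gterm
| PAnd of pform & pform
| POr of pform & pform.

Inductive eform : Type :=
| EQF of pform
| EEx of nat & eform.

(* Length = number of symbols, each variable counting as one symbol. *)
Fixpoint tsize (t : gterm) : nat :=
  match t with
  | TVar _ => 1
  | TOne => 1
  | TMul a b => (tsize a + tsize b).+1
  | TInv a => (tsize a).+1
  end.

Fixpoint psize (p : pform) : nat :=
  match p with
  | PEq a b => (tsize a + tsize b).+1
  | PAnd a b => (psize a + psize b).+1
  | POr a b => (psize a + psize b).+1
  end.

(* "exists x" contributes two symbols: the quantifier and the variable. *)
Fixpoint esize (f : eform) : nat :=
  match f with
  | EQF p => psize p
  | EEx _ f => (esize f).+2
  end.

Fixpoint tfv_lt (n : nat) (t : gterm) : bool :=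
  match t with
  | TVar i => i < n
  | TOne => true
  | TMul a b => tfv_lt n a && tfv_lt n b
  | TInv a => tfv_lt n a
  end.

Fixpoint pfv_lt (n : nat) (p : pform) : bool :=
  match p with
  | PEq a b => tfv_lt n a && tfv_lt n b
  | PAnd a b => pfv_lt n a && pfv_lt n b
  | POr a b => pfv_lt n a && pfv_lt n b
  end.

Fixpoint tfv (t : gterm) : seq nat :=
  match t with
  | TVar i => [:: i]
  | TOne => [::]
  | TMul a b => tfv a ++ tfv b
  | TInv a => tfv a
  end.

Fixpoint pfv (p : pform) : seq nat :=
  match p with
  | PEq a b => tfv a ++ tfv b
  | PAnd a b => pfv a ++ pfv b
  | POr a b => pfv a ++ pfv b
  end.

Fixpoint efv (f : eform) : seq nat :=
  match f with
  | EQF p => pfv p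
  | EEx x f => filter (fun i => i != x) (efv f)
  end.

(* Semantics in a group G (a subgroup of a finGroupType, quantifiers range over G). *)
Section Sem.
Variable gT : finGroupType.

Fixpoint teval (e : nat -> gT) (t : gterm) : gT :=
  match t with
  | TVar i => e i
  | TOne => 1
  | TMul a b => teval e a * teval e b
  | TInv a => (teval e a)^-1
  end.

Fixpoint psat (e : nat -> gT) (p : pform) : Prop :=
  match p with
  | PEq a b => teval e a = teval e b
  | PAnd a b => psat e a /\ psat e b
  | POr a b => psat e a \/ psat e b
  end.

Definition upd (e : nat -> gT) (x : nat) (y : gT) : nat -> gT :=
  fun i => if i == x then y else e i.

Fixpoint esat (G : {set gT}) (e : nat -> gT) (f : eform) : Prop :=
  match f with
  | EQF p => psat e p
  | EEx x f => exists2 y, y \in G & esat G (upd e x y) f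
  end.
End Sem.

(* log m = min { r : 2^r >= m } *)
Definition clog (m : nat) : nat := up_log 2 m.

(* Main.v *)
From Stdlib Require Import ClassicalEpsilon Classical Lia.
From mathcomp Require Import all_boot all_fingroup.
From mathcomp Require Import zify.
Require Import Defs.
Set Implicit Arguments. Unset Strict Implicit. Unset Printing Implicit Defensive.
Local Open Scope group_scope.

Definition exs (xs : seq nat) (f : eform) := foldr EEx f xs.
Definition pand (ps : seq pform) := foldr PAnd (PEq TOne TOne) ps.
Definition por (b : pform) (ps : seq pform) := foldr POr b ps.
Definition tprod (ts : seq gterm) := foldr TMul TOne ts.

Section SemL.
Variable gT : finGroupType.
Implicit Types e : nat -> gT.

Definition gprod (s : seq gT) := foldr (fun x y => x * y) 1 s.

Lemma teval_ext e1 e2 t : (forall i, e1 i = e2 i) -> teval e1 t = teval e2 t.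
Proof. by move=> h; elim: t => //= [a -> b ->| a ->]. Qed.

Lemma psat_ext e1 e2 p : (forall i, e1 i = e2 i) -> (psat e1 p <-> psat e2 p).
Proof.
move=> h; elim: p => /= [a b|a ha b hb|a ha b hb].
- by rewrite !(teval_ext _ h).
- by rewrite ha hb.
- by rewrite ha hb.
Qed.

Lemma psat_ext' e1 e2 p : psat e1 p -> (forall i, e1 i = e2 i) -> psat e2 p.
Proof. by move=> h1 h; apply/(psat_ext p h). Qed.

Lemma exs_sat (G : {group gT}) e xs p :
  esat G e (exs xs (EQF p)) <->
  exists f : nat -> gT, (forall i, f i \in G) /\
     psat (fun i => if i \in xs then f i else e i) p.
Proof.
elim: xs e => [|x xs IH] e /=.
  split; last by case=> f [].
  by move=> h; exists (fun _ => 1); split => // i; exact: group1.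
split.
  case=> y yG /IH [f [fG hf]].
  exists (fun i => if i \in xs then f i else y); split.
    by move=> i; case: ifP.
  apply: (psat_ext' hf) => i; rewrite in_cons /upd.
  by case: (i \in xs); case: (i == x); rewrite ?orbT.
case=> f [fG hf]; exists (f x) => //; apply/IH; exists f; split => //.
apply: (psat_ext' hf) => i; rewrite in_cons /upd.
case: (i \in xs); case: eqP => [->|]; by rewrite ?orbT.
Qed.
End SemL.

Section SemL2.
Variable gT : finGroupType.
Implicit Types e : nat -> gT.

Lemma pand_sat e (F : nat -> pform) s :
  psat e (pand (map F s)) <-> (forall x, x \in s -> psat e (F x)).
Proof.
elim: s => [|x s IH] /=; first by split.
rewrite IH; split.
  by case=> h1 h2 y; rewrite in_cons => /orP [/eqP ->|]; [| apply: h2].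
by move=> h; split; [apply: h; rewrite mem_head | move=> y hy; apply: h; rewrite in_cons hy orbT].
Qed.

Lemma por_sat e b (F : nat -> pform) s :
  psat e (por b (map F s)) <-> (psat e b \/ exists2 x, x \in s & psat e (F x)).
Proof.
elim: s => [|x s IH] /=; first by split; [left | case=> // [[]]].
rewrite IH; split.
  case=> [h|[h|[y hy h]]]; [right; exists x; rewrite ?mem_head | left | right; exists y] => //.
  by rewrite in_cons hy orbT.
case=> [h|[y]]; first by right; left.
rewrite in_cons => /orP [/eqP ->|hy] h; first by left.
by right; right; exists y.
Qed.

Lemma tprod_eval e (F : nat -> gterm) s :
  teval e (tprod (map F s)) = gprod (map (fun x => teval e (F x)) s).
Proof. by elim: s => //= x s ->. Qed.
End SemL2.

Lemma pand_size (F : nat -> pform) s m :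
  (forall x, x \in s -> psize (F x) <= m) -> psize (pand (map F s)) <= size s * m.+1 + 3.
Proof.
elim: s => [|x s IH] //= h.
have h1 := h x (mem_head _ _).
have h2 : psize (pand (map F s)) <= size s * m.+1 + 3.
  by apply: IH => y hy; apply: h; rewrite in_cons hy orbT.
rewrite mulSn; move: h1 h2; set a0 := psize (F x); set b0 := psize _; set c0 := (size s * _)%N; lia.
Qed.

Lemma por_size b (F : nat -> pform) s m :
  (forall x, x \in s -> psize (F x) <= m) -> psize (por b (map F s)) <= psize b + size s * m.+1.
Proof.
elim: s => [|x s IH] /= h; first by rewrite addn0.
have h1 := h x (mem_head _ _).
have h2 : psize (por b (map F s)) <= psize b + size s * m.+1.
  by apply: IH => y hy; apply: h; rewrite in_cons hy orbT.
rewrite mulSn; move: h1 h2; set a0 := psize (F x); set b0 := psize _; set c0 := (size s * _)%N; lia.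
Qed.

Lemma tprod_size (F : nat -> gterm) s m :
  (forall x, x \in s -> tsize (F x) <= m) -> tsize (tprod (map F s)) <= size s * m.+1 + 1.
Proof.
elim: s => [|x s IH] //= h.
have h1 := h x (mem_head _ _).
have h2 : tsize (tprod (map F s)) <= size s * m.+1 + 1.
  by apply: IH => y hy; apply: h; rewrite in_cons hy orbT.
rewrite mulSn; move: h1 h2; set a0 := tsize (F x); set b0 := tsize _; set c0 := (size s * _)%N; lia.
Qed.

Lemma tfv_ltE n t : tfv_lt n t = all (fun i => i < n) (tfv t).
Proof. by elim: t => [i||a ha b hb|a ha] /=; rewrite ?andbT ?all_cat ?ha ?hb. Qed.

Lemma pfv_ltE n p : pfv_lt n p = all (fun i => i < n) (pfv p).
Proof. by elim: p => [a b|a ha b hb|a ha b hb] /=; rewrite all_cat ?tfv_ltE ?ha ?hb. Qed.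

Lemma pand_fv n (F : nat -> pform) s :
  (forall x, x \in s -> pfv_lt n (F x)) -> pfv_lt n (pand (map F s)).
Proof.
elim: s => [|x s IH] //= h; rewrite h ?mem_head //=.
by apply: IH => y hy; apply: h; rewrite in_cons hy orbT.
Qed.

Lemma por_fv n b (F : nat -> pform) s :
  pfv_lt n b -> (forall x, x \in s -> pfv_lt n (F x)) -> pfv_lt n (por b (map F s)).
Proof.
move=> hb; elim: s => [|x s IH] //= h; rewrite h ?mem_head //=.
by apply: IH => y hy; apply: h; rewrite in_cons hy orbT.
Qed.

Lemma tprod_fv n (F : nat -> gterm) s :
  (forall x, x \in s -> tfv_lt n (F x)) -> tfv_lt n (tprod (map F s)).
Proof.
elim: s => [|x s IH] //= h; rewrite h ?mem_head //=.
by apply: IH => y hy; apply: h; rewrite in_cons hy orbT.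
Qed.

Lemma efv_exs xs f i : i \in efv (exs xs f) -> (i \in efv f) && (i \notin xs).
Proof.
elim: xs => [|x xs IH] /=; first by move=> ->.
rewrite mem_filter => /andP [hx /IH /andP [-> h]].
by rewrite in_cons negb_or hx h.
Qed.

Lemma esize_exs xs p : esize (exs xs (EQF p)) = (size xs).*2 + psize p.
Proof. by elim: xs => //= x xs ->; rewrite doubleS. Qed.

Local Close Scope group_scope.
Local Open Scope group_scope.

Section Cube.
Variable gT : finGroupType.
Implicit Types zs : seq gT.

Fixpoint Kr zs : {set gT} := if zs is z :: zs' then Kr zs' :|: Kr zs' :* z else [set 1].
Definition Kc zs := Kr (rev zs).
Definition DK (A : {set gT}) := [set a^-1 * b | a in A, b in A].

Lemma Kc_rcons zs z : Kc (rcons zs z) = Kc zs :|: Kc zs :* z.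
Proof. by rewrite /Kc rev_rcons. Qed.

Lemma Kr1 zs : 1 \in Kr zs.
Proof. by elim: zs => [|z zs IH] /=; rewrite ?set11 // inE IH. Qed.

Lemma Kc1 zs : 1 \in Kc zs.
Proof. exact: Kr1. Qed.

Lemma gprod_cat (s1 s2 : seq gT) : gprod (s1 ++ s2) = gprod s1 * gprod s2.
Proof. by elim: s1 => /= [|x s1 ->]; rewrite ?mul1g ?mulgA. Qed.

Lemma gprod_mem (H : {group gT}) (s : seq gT) : (forall x, x \in s -> x \in H) -> gprod s \in H.
Proof.
elim: s => [|x s IH] h /=; first exact: group1.
apply: groupM; first by apply: h; rewrite mem_head.
apply: IH => y hy; apply: h; by rewrite in_cons hy orbT.
Qed.

Definition wprod zs (b : nat -> bool) n :=
  gprod [seq (if b l then nth 1 zs l else 1) | l <- iota 0 n].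

Lemma wprod_rcons zs z b :
  wprod (rcons zs z) b (size zs).+1 = wprod zs b (size zs) * (if b (size zs) then z else 1).
Proof.
rewrite /wprod -addn1 iotaD map_cat gprod_cat /= nth_rcons ltnn eqxx mulg1.
congr (gprod _ * _); apply/eq_in_map => l; rewrite mem_iota /= => hl.
by rewrite nth_rcons hl.
Qed.

Lemma wprod_ext zs b b' n : (forall l, l < n -> b l = b' l) -> wprod zs b n = wprod zs b' n.
Proof.
move=> h; rewrite /wprod; congr gprod; apply/eq_in_map => l.
by rewrite mem_iota /= => hl; rewrite h.
Qed.

Lemma Kc_memP zs a : a \in Kc zs <-> exists b : nat -> bool, a = wprod zs b (size zs).
Proof.
elim/last_ind: zs a => [|zs z IH] a.
  by rewrite /Kc /= inE /wprod /=; split; [move/eqP -> ; exists (fun _ => false)|case=> b ->].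
rewrite Kc_rcons inE size_rcons.
split.
  case/orP => [/IH [b ->]|].
    exists (fun l => if l == size zs then false else b l).
    rewrite wprod_rcons eqxx mulg1; apply: wprod_ext => l hl.
    by rewrite ifN // neq_ltn hl.
  rewrite mem_rcoset => /IH [b hb].
  exists (fun l => if l == size zs then true else b l).
  rewrite wprod_rcons eqxx (@wprod_ext zs _ b); first by rewrite -hb mulgKV.
  by move=> l hl; rewrite ifN // neq_ltn hl.
case=> b ->; rewrite wprod_rcons.
have hw : wprod zs b (size zs) \in Kc zs by apply/IH; exists b.
by case: (b (size zs)); rewrite ?mulg1 ?hw // mem_rcoset mulgK hw orbT.
Qed.

Lemma Kc_sub (H : {group gT}) zs : (forall z, z \in zs -> z \in H) -> Kc zs \subset H.
Proof.
move=> hz; apply/subsetP => a /Kc_memP [b ->]; apply: gprod_mem => x /mapP [l _ ->].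
case: (b l); last exact: group1.
case: (ltnP l (size zs)) => hl; first by apply: hz; apply: mem_nth.
by rewrite nth_default // group1.
Qed.

Lemma DK_mono (A B : {set gT}) : A \subset B -> DK A \subset DK B.
Proof.
move=> sAB; apply/subsetP => x /imset2P [a b ha hb ->].
by apply/imset2P; exists a b => //; apply: (subsetP sAB).
Qed.

Lemma closure (X S : {set gT}) : 1 \in S ->
  (forall u y, u \in S -> y \in X -> u * y \in S) -> <<X>> \subset S.
Proof.
move=> S1 hS.
pose T := [set h | [forall u in S, u * h \in S]].
have gT_ : group_set T.
  apply/andP; split.
    by rewrite inE; apply/forall_inP => u hu; rewrite mulg1.
  apply/subsetP => h /mulsgP [h1 h2]; rewrite !inE => /forall_inP H1 /forall_inP H2 ->.
  by apply/forall_inP => u hu; rewrite mulgA H2 // H1.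
have sXT : <<X>> \subset Group gT_.
  rewrite gen_subG; apply/subsetP => y hy; rewrite inE; apply/forall_inP => u hu.
  exact: hS.
apply/subsetP => h /(subsetP sXT); rewrite inE => /forall_inP /(_ 1 S1).
by rewrite mul1g.
Qed.
End Cube.

Section Build.
Variable gT : finGroupType.
Implicit Types zs : seq gT.

Definition valid (X : {set gT}) zs := forall l, l < size zs ->
  exists2 y, (y = 1 \/ y \in X) & exists a b,
    [/\ a \in Kc (take l zs), b \in Kc (take l zs) & nth 1 zs l = a^-1 * b * y].

Lemma valid_rcons X zs z : valid X zs ->
  (exists2 y, (y = 1 \/ y \in X) & exists a b, [/\ a \in Kc zs, b \in Kc zs & z = a^-1 * b * y]) ->
  valid X (rcons zs z).
Proof.
move=> hv hz l; rewrite size_rcons ltnS leq_eqVlt => /orP [/eqP ->|hl].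
  by rewrite -cats1 takel_cat // take_size nth_cat ltnn subnn.
rewrite -cats1 takel_cat ?(ltnW hl) // nth_cat hl; exact: hv.
Qed.

Lemma build (X : {set gT}) i : exists zs, [/\ size zs = i, (forall z, z \in zs -> z \in <<X>>),
  valid X zs & (<<X>> \subset DK (Kc zs) \/ #|Kc zs| = (2 ^ i)%N)].
Proof.
elim: i => [|i [zs [hs hin hv hd]]].
  exists [::]; split => //; right; by rewrite /Kc /= cards1.
have hK : Kc zs \subset <<X>> by apply: Kc_sub.
have D1 : 1 \in DK (Kc zs) by apply/imset2P; exists 1 1; rewrite ?Kc1 ?invg1 ?mulg1.
case: (boolP (<<X>> \subset DK (Kc zs))) => hsub.
  exists (rcons zs 1); split.
  - by rewrite size_rcons hs.
  - by move=> z; rewrite mem_rcons in_cons => /orP [/eqP ->|/hin]; rewrite ?group1.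
  - apply: valid_rcons => //; exists 1; first by left.
    by exists 1, 1; rewrite Kc1 invg1 !mulg1.
  - left; apply: subset_trans hsub _; apply: DK_mono; rewrite Kc_rcons; exact: subsetUl.
have hc : #|Kc zs| = (2 ^ i)%N by case: hd => // h; rewrite h in hsub.
case: (classic (exists u y, [/\ u \in DK (Kc zs), y \in X & u * y \notin DK (Kc zs)])).
  case=> u [y [/imset2P [a b ha hb ->] hy hn]].
  exists (rcons zs (a^-1 * b * y)); split.
  - by rewrite size_rcons hs.
  - move=> z; rewrite mem_rcons in_cons => /orP [/eqP ->|/hin] //.
    apply: groupM; last exact: mem_gen.
    by apply: groupM; [rewrite groupV|]; apply: (subsetP hK).
  - apply: valid_rcons => //; exists y; first by right.
    by exists a, b.
  right; set z := a^-1 * b * y.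
  have hI : Kc zs :&: Kc zs :* z = set0.
    apply/setP => x; rewrite inE [x \in set0]inE; apply/negbTE/andP => [[hx]].
    rewrite mem_rcoset => hxz; move/negP: hn; apply; apply/imset2P.
    by exists (x * z^-1) x => //; rewrite invMg invgK mulgKV.
  rewrite Kc_rcons cardsU hI cards0 card_rcoset hc expnS; lia.
move=> hno; exfalso; move/negP: hsub; apply; apply: closure => // u y hu hy.
apply/negPn/negP => hn; apply: hno; by exists u, y.
Qed.
End Build.

Local Close Scope group_scope.

Section Formula.
Variables k t : nat.
Definition B := k.+1.
Definition M := t.+1.
Definition code q m := B + (q * M + m).
Definition Zv i := code 0 i.
Definition Yv i := code 1 i.
Definition Wv (s : bool) i l := if s then code (2 + M + i) l else code (2 + i) l.
Definition vprod s i := tprod (map (fun l => TVar (Wv s i l)) (iota 0 i)).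
Definition zeq i := PEq (TVar (Zv i)) (TMul (TMul (TInv (vprod false i)) (vprod true i)) (TVar (Yv i))).
Definition ych i := por (PEq (TVar (Yv i)) TOne) (map (fun j => PEq (TVar (Yv i)) (TVar j.+1)) (iota 0 k)).
Definition wc s i l := POr (PEq (TVar (Wv s i l)) (TVar (Zv l))) (PEq (TVar (Wv s i l)) TOne).
Definition wcs i := pand (map (fun l => PAnd (wc false i l) (wc true i l)) (iota 0 i)).
Definition geq := PEq (TVar 0) (TMul (TInv (vprod false t)) (vprod true t)).
Definition Pf := PAnd (pand (map zeq (iota 0 t)))
  (PAnd (pand (map ych (iota 0 t))) (PAnd (pand (map wcs (iota 0 t.+1))) geq)).
Definition L := (2 + M + M) * M.
Definition beta := exs (iota B L) (EQF Pf).

Lemma vprod_size s i : tsize (vprod s i) <= i * 2 + 1.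
Proof. by have := @tprod_size (fun l => TVar (Wv s i l)) (iota 0 i) 1; rewrite size_iota; apply. Qed.

Lemma Pf_size : psize Pf <= t * (4 * t + 9) + t * (4 * k + 4) + t.+1 * (16 * t + 4) + 4 * t + 20.
Proof.
have h1 : psize (pand (map zeq (iota 0 t))) <= t * (4 * t + 9) + 3.
  have := @pand_size zeq (iota 0 t) (4 * t + 8); rewrite size_iota.
  have -> : (4 * t + 8).+1 = 4 * t + 9 by lia.
  apply => i; rewrite mem_iota /= => hi.
  have := vprod_size false i; have := vprod_size true i; rewrite /zeq /=; lia.
have h2 : psize (pand (map ych (iota 0 t))) <= t * (4 * k + 4) + 3.
  have := @pand_size ych (iota 0 t) (4 * k + 3); rewrite size_iota.
  have -> : (4 * k + 3).+1 = 4 * k + 4 by lia.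
  apply => i _; have := @por_size (PEq (TVar (Yv i)) TOne) (fun j => PEq (TVar (Yv i)) (TVar j.+1)) (iota 0 k) 3.
  rewrite size_iota /ych /=; move=> h; have := h (fun _ _ => leqnn 3); lia.
have h3 : psize (pand (map wcs (iota 0 t.+1))) <= t.+1 * (16 * t + 4) + 3.
  have := @pand_size wcs (iota 0 t.+1) (16 * t + 3); rewrite size_iota.
  have -> : (16 * t + 3).+1 = 16 * t + 4 by lia.
  apply => i; rewrite mem_iota /= => hi.
  have := @pand_size (fun l => PAnd (wc false i l) (wc true i l)) (iota 0 i) 15.
  rewrite size_iota /wcs; move=> h; have := h (fun _ _ => leqnn 15); nia.
have h4 : psize geq <= 4 * t + 6.
  have := vprod_size false t; have := vprod_size true t; rewrite /geq /=; lia.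
have -> : psize Pf = (psize (pand (map zeq (iota 0 t))) + (psize (pand (map ych (iota 0 t))) + (psize (pand (map wcs (iota 0 t.+1))) + psize geq).+1).+1).+1 by [].
lia.
Qed.

Lemma code_lt q m : q < 2 + M + M -> m < M -> code q m < B + L.
Proof.
move=> hq hm; rewrite /code /L ltn_add2l.
apply: (@leq_trans (q.+1 * M)); first by rewrite mulSn; lia.
by rewrite leq_mul2r hq orbT.
Qed.

Lemma Pf_fv : pfv_lt (B + L) Pf.
Proof.
have hB : forall j, j < B -> j < B + L by move=> j hj; apply: leq_trans hj (leq_addr _ _).
have hM : t < M by [].
have hW : forall s i l, i <= t -> l < i -> Wv s i l < B + L.
  move=> [] i l hi hl; apply: code_lt; rewrite /M; lia.
have hvp : forall s i, i <= t -> tfv_lt (B + L) (vprod s i).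
  move=> s i hi; apply: tprod_fv => l; rewrite mem_iota /= => hl; exact: hW.
have hZ : forall i, i < t -> Zv i < B + L by move=> i hi; apply: code_lt; rewrite /M; lia.
have hY : forall i, i < t -> Yv i < B + L by move=> i hi; apply: code_lt; rewrite /M; lia.
rewrite /Pf /=; apply/andP; split.
  apply: pand_fv => i; rewrite mem_iota /= => hi.
  by rewrite /zeq /= hZ // hY // !hvp // ltnW.
apply/andP; split.
  apply: pand_fv => i; rewrite mem_iota /= => hi.
  apply: por_fv; first by rewrite /= hY.
  move=> j; rewrite mem_iota /= => hj; rewrite hY //=; apply: hB; rewrite /B; lia.
apply/andP; split.
  apply: pand_fv => i; rewrite mem_iota /= => hi.
  apply: pand_fv => l; rewrite mem_iota /= => hl.
  rewrite /= /Zv !code_lt //; rewrite /M; lia.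
by rewrite /geq /= !hvp // hB.
Qed.
End Formula.

Section Sem3.
Variable gT : finGroupType.
Variables k t : nat.
Local Open Scope group_scope.

Lemma vprod_eval (E : nat -> gT) s i :
  teval E (vprod k t s i) = gprod (map (fun l => E (Wv k t s i l)) (iota 0 i)).
Proof. by rewrite /vprod tprod_eval. Qed.

Lemma Pf_sat (E : nat -> gT) : psat E (Pf k t) <->
  [/\ psat E (pand (map (zeq k t) (iota 0 t))), psat E (pand (map (ych k t) (iota 0 t))),
      psat E (pand (map (wcs k t) (iota 0 t.+1))) & psat E (geq k t)].
Proof. by rewrite /Pf /=; split; [case=> [? [? []]]|case]. Qed.

Lemma sound (H : {group gT}) (E : nat -> gT) :
  (forall j, j < k -> E j.+1 \in H) -> psat E (Pf k t) -> E 0 \in H.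
Proof.
move=> hx /Pf_sat [hz hy hw hg].
move: hz => /(pand_sat _ _ _) hz. move: hy => /(pand_sat _ _ _) hy. move: hw => /(pand_sat _ _ _) hw.
have hY : forall i, i < t -> E (Yv k t i) \in H.
  move=> i hi; have := hy i; rewrite mem_iota /= => /(_ hi) /(por_sat _ _ _ _) [/= ->|[j]].
    exact: group1.
  by rewrite mem_iota /= => hj ->; apply: hx.
have hV : forall s i, i <= t -> (forall l, l < i -> E (Zv k t l) \in H) ->
    teval E (vprod k t s i) \in H.
  move=> s i hi hZ; rewrite vprod_eval; apply: gprod_mem => x /mapP [l].
  rewrite mem_iota /= => hl ->.
  have := hw i; rewrite mem_iota /= ltnS => /(_ hi) /(pand_sat _ _ _) /(_ l).
  rewrite mem_iota /= => /(_ hl) [h0 h1].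
  case: s; [case: h1|case: h0] => /= ->; rewrite ?group1 //; exact: hZ.
have hZ : forall i, i <= t -> forall l, l < i -> E (Zv k t l) \in H.
  elim=> [|i IH] hi l //; rewrite ltnS leq_eqVlt => /orP [/eqP ->|]; last first.
    by apply: IH; apply: ltnW.
  have := hz i; rewrite mem_iota /= => /(_ hi) /= ->.
  apply: groupM; last exact: hY.
  apply: groupM; first rewrite groupV.
    by apply: hV => [|l' hl']; [apply: ltnW | apply: IH => //; apply: ltnW].
  by apply: hV => [|l' hl']; [apply: ltnW | apply: IH => //; apply: ltnW].
move: hg => /= ->; apply: groupM; first rewrite groupV.
  by apply: hV => // l hl; apply: hZ (leqnn t) _ _.
by apply: hV => // l hl; apply: hZ (leqnn t) _ _.
Qed.
Lemma complete (E : nat -> gT) (zs : seq gT) (yv : nat -> gT) (bits : bool -> nat -> nat -> bool) :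
  (forall i, i < t -> E (Zv k t i) = nth 1 zs i) ->
  (forall i, i < t -> E (Yv k t i) = yv i) ->
  (forall s i l, i <= t -> l < i -> E (Wv k t s i l) = if bits s i l then nth 1 zs l else 1) ->
  (forall i, i < t -> yv i = 1 \/ exists2 j, j < k & yv i = E j.+1) ->
  (forall i, i < t -> nth 1 zs i = (wprod zs (bits false i) i)^-1 * wprod zs (bits true i) i * yv i) ->
  E 0 = (wprod zs (bits false t) t)^-1 * wprod zs (bits true t) t ->
  psat E (Pf k t).
Proof.
move=> hZ hY hW hyv hzs hg.
have hV : forall s i, i <= t -> teval E (vprod k t s i) = wprod zs (bits s i) i.
  move=> s i hi; rewrite vprod_eval /wprod; congr gprod; apply/eq_in_map => l.
  by rewrite mem_iota => /andP [_ hl]; rewrite hW.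
apply/Pf_sat; split.
- apply/(pand_sat _ _ _) => i; rewrite mem_iota => /andP [_ hi].
  rewrite /zeq; change (E (Zv k t i) = (teval E (vprod k t false i))^-1 * teval E (vprod k t true i) * E (Yv k t i)).
  by rewrite (hV false i (ltnW hi)) (hV true i (ltnW hi)) (hZ i hi) (hY i hi) (hzs i hi).
- apply/(pand_sat _ _ _) => i; rewrite mem_iota => /andP [_ hi].
  apply/(por_sat _ _ _ _).
  change (E (Yv k t i) = 1 \/ exists2 j, j \in iota 0 k & E (Yv k t i) = E j.+1).
  rewrite (hY i hi); case: (hyv i hi) => [->|[j hj ->]]; first by left.
  by right; exists j; rewrite ?mem_iota.
- apply/(pand_sat _ _ _) => i; rewrite mem_iota ltnS => /andP [_ hi].
  apply/(pand_sat _ _ _) => l; rewrite mem_iota => /andP [_ hl].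
  have hlt : l < t by apply: leq_trans hl hi.
  change ((E (Wv k t false i l) = E (Zv k t l) \/ E (Wv k t false i l) = 1) /\
          (E (Wv k t true i l) = E (Zv k t l) \/ E (Wv k t true i l) = 1)).
  rewrite (hW false i l hi hl) (hW true i l hi hl) (hZ l hlt).
  by split; case: (bits _ i l); [left|right|left|right].
- rewrite /geq; change (E 0 = (teval E (vprod k t false t))^-1 * teval E (vprod k t true t)).
  by rewrite (hV false t (leqnn t)) (hV true t (leqnn t)).
Qed.
End Sem3.


Lemma fdec k t q m : m < M t -> ((code k t q m - B k) %/ M t = q) /\ ((code k t q m - B k) %% M t = m).
Proof.
move=> hm; rewrite /code addKn; split.
  by rewrite divnMDl // divn_small // addn0.
by rewrite modnMDl modn_small.
Qed.

Lemma code_in k t q m : q < 2 + M t + M t -> m < M t -> code k t q m \in iota (B k) (L t).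
Proof. by move=> hq hm; rewrite mem_iota leq_addr /= code_lt. Qed.

Section Main.
Variable gT : finGroupType.
Local Open Scope group_scope.

Lemma wprod_take (zs : seq gT) b i n : n <= i -> wprod (take i zs) b n = wprod zs b n.
Proof.
move=> hn; rewrite /wprod; congr gprod; apply/eq_in_map => l; rewrite mem_iota => /andP [_ hl].
by rewrite nth_take //; apply: leq_trans hl hn.
Qed.

Lemma nth_in (H : {group gT}) (zs : seq gT) l : (forall z, z \in zs -> z \in H) -> nth 1 zs l \in H.
Proof.
move=> h; case: (ltnP l (size zs)) => hl; first by apply: h; apply: mem_nth.
by rewrite nth_default // group1.
Qed.
End Main.

Local Open Scope group_scope.

Theorem lemma3p5 :
  exists c : nat, forall k v : nat, 0 < k -> 1 < v ->
    exists beta : eform,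
      all (fun i => i < k.+1) (efv beta) /\
      esize beta <= c * (k * clog v + clog v ^ 2) /\
      forall (gT : finGroupType) (G : {group gT}), #|G| <= v ->
        forall e : nat -> gT, (forall i, e i \in G) ->
          (esat G e beta <-> e 0%N \in <<[set e (val i).+1 | i : 'I_k]>>).
Proof.
exists 400; move=> k v hk hv.
have hn : (0 < clog v)%N by rewrite /clog up_log_gt0 hv.
have hvn : (v <= 2 ^ clog v)%N by apply: up_logP.
move: hn hvn; set n := clog v => hn hvn.
set t := n.+1.
exists (beta k t); split; [|split].
- apply/allP => i /efv_exs /andP [hi hni].
  have := Pf_fv k t; rewrite pfv_ltE => /allP /(_ i hi).
  move: hni; rewrite mem_iota /B; lia.
- rewrite /beta esize_exs size_iota.
  have := Pf_size k t; rewrite /L /M /t => hP.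
  have h1 : (n <= n * n)%N by nia.
  have h2 : (k <= k * n)%N by nia.
  rewrite -mulnn; nia.
move=> gT G hG e he.
set X := [set e (val i).+1 | i : 'I_k].
have hXG : <<X>> \subset G.
  by rewrite gen_subG; apply/subsetP => x /imsetP [j _ ->].
have hB : forall j, (j < B k)%N -> j \notin iota (B k) (L t).
  by move=> j hj; rewrite mem_iota negb_and -ltnNge hj.
rewrite /beta exs_sat; split.
  case=> f [fG hP].
  have := @sound gT k t <<X>>%G _ ^~ hP; rewrite ifN ?hB //; apply.
  move=> j hj; rewrite ifN ?hB /B //; apply: mem_gen; apply/imsetP.
  by exists (Ordinal hj).
move=> hg.
have [zs [hs hin hval hd]] := build X t.
have hK : Kc zs \subset <<X>> by apply: Kc_sub.
have hsub : <<X>> \subset DK (Kc zs).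
  case: hd => // hc; exfalso.
  have : (#|Kc zs| <= v)%N.
    by apply: leq_trans hG; apply: subset_leq_card; apply: subset_trans hK hXG.
  rewrite hc /t expnS; have : (0 < 2 ^ n)%N by rewrite expn_gt0.
  move: hvn; lia.
have hdata : forall i, exists p : gT * ((nat -> bool) * (nat -> bool)),
   [/\ p.1 \in <<X>>,
       ((i < t)%N -> ((p.1 = 1) \/ (p.1 \in X)) /\
          (nth 1 zs i = (wprod zs p.2.1 i)^-1 * wprod zs p.2.2 i * p.1)) &
       (i = t -> e 0%N = (wprod zs p.2.1 t)^-1 * wprod zs p.2.2 t)].
  move=> i; case: (ltnP i t) => hit.
    have := hval i; rewrite hs => /(_ hit) [y hy [a [b [ha hb hz]]]].
    have hsz : size (take i zs) = i by rewrite size_takel // hs ltnW.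
    move/Kc_memP: ha => -[ba]; rewrite hsz wprod_take // => ea.
    move/Kc_memP: hb => -[bb]; rewrite hsz wprod_take // => eb.
    exists (y, (ba, bb)); split => //=.
    - by case: hy => [->|hy]; [apply: group1 | apply: mem_gen].
    - by rewrite hz ea eb.
    - by move=> hi; rewrite hi ltnn in hit.
  case: (eqVneq i t) => [hi|hi].
    move/(subsetP hsub): hg => /imset2P [a b ha hb ->].
    move/Kc_memP: ha => -[ba]; rewrite hs => ea.
    move/Kc_memP: hb => -[bb]; rewrite hs => eb.
    exists (1, (ba, bb)); split => /=; first exact: group1.
    - by move=> h; exfalso; move: h; rewrite ?hi ?ltnn.
    - by rewrite ea eb.
  exists (1, (fun _ => false, fun _ => false)); split => /=; first exact: group1.
  - by move=> h; exfalso; move: h; rewrite ?ltnNge ?hit.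
  - by move=> h; rewrite h eqxx in hi.
pose pk := fun i => proj1_sig (constructive_indefinite_description _ (hdata i)).
have pkP : forall i, _ := fun i => proj2_sig (constructive_indefinite_description _ (hdata i)).
pose yv := fun i => (pk i).1.
pose bits := fun (s : bool) i => if s then (pk i).2.2 else (pk i).2.1.
pose w := fun s i l => if bits s i l then nth 1 zs l else 1.
pose fq := fun q m => if q == 0%N then nth 1 zs m else if q == 1%N then yv m
   else if (q < 2 + M t)%N then w false (q - 2)%N m else w true (q - (2 + M t))%N m.
pose f := fun c => fq ((c - B k) %/ M t)%N ((c - B k) %% M t)%N.
exists f; split.
  move=> c; rewrite /f /fq; apply: (subsetP hXG).
  case: ifP => _; first exact: nth_in.
  case: ifP => _; first by case: (pkP ((c - B k) %% M t)%N).
  by case: ifP => _; rewrite /w; case: ifP => _; rewrite ?group1 // nth_in.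
have hE : forall q m, (q < 2 + M t + M t)%N -> (m < M t)%N ->
    (if code k t q m \in iota (B k) (L t) then f (code k t q m) else e (code k t q m)) = fq q m.
  move=> q m hq hm; rewrite code_in // /f; have [-> ->] := fdec k q hm; done.
have hMt : (t < M t)%N by [].
apply: (complete (zs := zs) (yv := yv) (bits := bits)).
- move=> i hi; rewrite /Zv hE //; rewrite /M; lia.
- move=> i hi; rewrite /Yv hE //; first by rewrite /M; lia.
- move=> s i l hi hl; rewrite /Wv; case: s.
    rewrite hE; last by rewrite /M; lia.
      rewrite /fq /= ltnNge -addnA leq_addr /=.
      by rewrite addnA addKn.
    rewrite /M; lia.
  rewrite hE; last by rewrite /M; lia.
    rewrite /fq /= ltn_add2l.
    have -> : (i < M t)%N by rewrite /M; lia.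
    by rewrite /w addKn.
  rewrite /M; lia.
- move=> i hi; rewrite /yv; case: (pkP i) => _ /(_ hi) [[->|hX] _] _; first by left.
  right; move/imsetP: hX => [j _ ->]; exists (val j) => //.
    exact: ltn_ord.
  by rewrite ifN ?hB // /B ltnS ltn_ord.
- by move=> i hi; rewrite /yv /bits /=; case: (pkP i) => _ /(_ hi) [_ h] _; exact: h.
- rewrite ifN ?hB // /bits /=; by case: (pkP t) => _ _ h; exact: h.
Qed.
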